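(* Fix $-1<\alpha<0$ and a continuously differentiable $f:(0,\infty)\times\mathbb T\to\mathbb R$. Assume there is $T_1<\infty$ with $f(t,x)=0$ for $t\ge T_1$ and that $\|f\|_{C^1(\Omega_{0\bullet})}<\infty$. Let $f_n(t,x)=f(t,x)\varphi_n(t)$, $n\in\mathbb N_0$ (extended by $0$ for $t\le0$). Then there exists a finite constant $C_0$, independent of $\alpha$ and $f$, such that $$|X(f_n)|\le C_0\,2^{-n(1+\alpha)}\,\|f\|_{C^1(\Omega_{0\bullet})}\,\|X\|_{C^\alpha([-1,2]\times\mathbb T)}$$ for all $X\in C^\alpha$ and $n\in\mathbb N_0$.
   Context: $\mathbb T=[-1/2,1/2)$; on $\mathbb R\times\mathbb T$, $d((t,x),(t',x'))=|t-t'|+d_{\mathbb T}(x,x')$, $\mathbb B(z,a)$ the open ball. $\Omega_{0\bullet}=(0,\infty)\times\mathbb T$ and $\|f\|_{C^1(\Omega_{0\bullet})}=\|f\|_{L^\infty(\Omega_{0\bullet})}+\|\partial_tf\|_{L^\infty(\Omega_{0\bullet})}+\|\partial_xf\|_{L^\infty(\Omega_{0\bullet})}$. $\varphi:\mathbb R_+\to[0,1]$ is a smooth function with $\varphi(r)=0$ for $r\notin(1/16,1/4)$ and $\sum_{n\in\mathbb Z}\varphi(2^nr)=1$ for $r>0$; $\varphi_n(r)=\varphi(2^nr)$. For $-1<\alpha<0$: $B_1$ is the set of $g\in C^1_c(\mathbb R\times\mathbb T)$ supported in $\mathbb B(0,1/4)$ with $\|g\|_\infty+\|\partial_tg\|_\infty+\|\partial_xg\|_\infty\le1$;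 $(S^\delta_zg)(w)=\delta^{-2}g((w-z)/\delta)$ on $\mathbb B(z,\delta)$, $0$ otherwise; for a linear functional $X$ on $C^1_c(\mathbb R\times\mathbb T)$, $\|X\|_{C^\alpha([S,T]\times\mathbb T)}=\sup_{\delta\in(0,1]}\sup_{z\in[S,T]\times\mathbb T}\sup_{g\in B_1}\delta^{-\alpha}|X(S^\delta_zg)|$; $C^\alpha$ is the set of $X$ with this finite for all $S<T$. *)

(* Defs.v *)
From Stdlib Require Import Reals.
From Coquelicot Require Import Coquelicot.
Open Scope R_scope.

(* Functions on R x T, T = [-1/2,1/2) = R/Z, are represented as functions
   R -> R -> R that are 1-periodic in the second variable. *)
Definition periodic_x (D : R -> Prop) (f : R -> R -> R) : Prop :=
  forall t x, D t -> f t (x + 1) = f t x.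

Definition dT (x y : R) : R :=
  Rmin (frac_part (x - y)) (1 - frac_part (x - y)).

Definition dist2 (t x t' x' : R) : R := Rabs (t - t') + dT x x'.

Definition dt (f : R -> R -> R) (t x : R) : R := Derive (fun s => f s x) t.
Definition dx (f : R -> R -> R) (t x : R) : R := Derive (fun y => f t y) x.

Definition cont2 (h : R -> R -> R) (t x : R) : Prop :=
  continuous (fun p : R * R => h (fst p) (snd p)) (t, x).

Definition C1_on (D : R -> Prop) (f : R -> R -> R) : Prop :=
  periodic_x D f /\
  forall t x, D t ->
    ex_derive (fun s => f s x) t /\ ex_derive (fun y => f t y) x /\
    cont2 f t x /\ cont2 (dt f) t x /\ cont2 (dx f) t x.

Definition C1c (g : R -> R -> R) : Prop :=
  C1_on (fun _ => True) g /\
  exists M, forall t x, M < Rabs t -> g t x = 0.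

Definition supnorm_on (D : R -> Prop) (h : R -> R -> R) : Rbar :=
  Lub_Rbar (fun y => exists t x, D t /\ y = Rabs (h t x)).

Definition C1norm_on (D : R -> Prop) (f : R -> R -> R) : Rbar :=
  Rbar_plus (Rbar_plus (supnorm_on D f) (supnorm_on D (dt f))) (supnorm_on D (dx f)).

Definition Omega0 (t : R) : Prop := 0 < t.

Definition B1 (g : R -> R -> R) : Prop :=
  C1c g /\
  (* supp g (closure of {g <> 0}) is contained in the open ball B(0,1/4) *)
  (forall t x,
     (forall eps, 0 < eps -> exists t' x', dist2 t x t' x' < eps /\ g t' x' <> 0) ->
     dist2 t x 0 0 < 1/4) /\
  Rbar_le (C1norm_on (fun _ => True) g) 1.

(* representative in [-1/2,1/2) of a real modulo 1 *)
Definition repT (u : R) : R := u - IZR (Int_part (u + 1/2)).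

(* lift of g (a function on R x T supported in B(0,1/4)) to R x R,
   using the chart T ~ [-1/2,1/2) *)
Definition lift (g : R -> R -> R) (a b : R) : R :=
  if Rlt_dec (Rabs b) (1/2) then g a b else 0.

Definition Sdz (delta s y : R) (g : R -> R -> R) : R -> R -> R :=
  fun t x =>
    if Rlt_dec (dist2 t x s y) delta
    then / (delta ^ 2) * lift g ((t - s) / delta) (repT (x - y) / delta)
    else 0.

Definition linear_on_C1c (X : (R -> R -> R) -> R) : Prop :=
  forall f g a b, C1c f -> C1c g ->
    X (fun t x => a * f t x + b * g t x) = a * X f + b * X g.

Definition Holder_norm (alpha : R) (X : (R -> R -> R) -> R) (S T : R) : Rbar :=
  Lub_Rbar (fun v => exists delta s y g,
    0 < delta <= 1 /\ S <= s <= T /\ -1/2 <= y < 1/2 /\ B1 g /\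
    v = Rpower delta (- alpha) * Rabs (X (Sdz delta s y g))).

Definition in_Calpha (alpha : R) (X : (R -> R -> R) -> R) : Prop :=
  linear_on_C1c X /\ forall S T, S < T -> is_finite (Holder_norm alpha X S T).

Definition dyadic_partition (phi : R -> R) : Prop :=
  (forall k r, ex_derive_n phi k r) /\
  (forall r, 0 <= phi r <= 1) /\
  (forall r, ~ (1/16 < r < 1/4) -> phi r = 0) /\
  (forall r, 0 < r -> exists a b,
     is_series (fun k : nat => phi (2 ^ k * r)) a /\
     is_series (fun k : nat => phi (r / 2 ^ (S k))) b /\ a + b = 1).

Definition fn (phi : R -> R) (f : R -> R -> R) (n : nat) : R -> R -> R :=
  fun t x => if Rlt_dec 0 t then f t x * phi (2 ^ n * t) else 0.

(* Main.v *)
Require Import Defs.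
From Stdlib Require Import Reals Lra Lia Psatz ZArith FunctionalExtensionality.
From Coquelicot Require Import Coquelicot.
Open Scope R_scope.

Lemma locally_box (t0 x0 eps : R) (P : R * R -> Prop) : 0 < eps ->
  (forall t x, Rabs (t - t0) < eps -> Rabs (x - x0) < eps -> P (t, x)) ->
  locally (t0, x0) P.
Proof.
  intros He H. exists (mkposreal eps He). intros [t x] [H1 H2].
  apply H; [exact H1|exact H2].
Qed.

Lemma locally_R (t0 eps : R) (P : R -> Prop) : 0 < eps ->
  (forall t, Rabs (t - t0) < eps -> P t) -> locally t0 P.
Proof.
  intros He H. exists (mkposreal eps He). intros t Ht. apply H. exact Ht.
Qed.

Lemma cont2_ext_box (h g : R -> R -> R) t0 x0 eps : 0 < eps ->
  (forall t x, Rabs (t - t0) < eps -> Rabs (x - x0) < eps -> h t x = g t x) ->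
  cont2 g t0 x0 -> cont2 h t0 x0.
Proof.
  intros He Heq Hc. unfold cont2 in *.
  assert (E : h t0 x0 = g t0 x0) by (apply Heq; rewrite Rminus_diag, Rabs_R0; lra).
  unfold continuous. simpl. rewrite E.
  eapply filterlim_ext_loc; [|exact Hc].
  apply (locally_box t0 x0 eps); auto. intros t x H1 H2. simpl. symmetry; auto.
Qed.

Lemma cont2_plus (f g : R -> R -> R) t x : cont2 f t x -> cont2 g t x ->
  cont2 (fun t x => f t x + g t x) t x.
Proof. intros H1 H2. unfold cont2 in *. apply (continuous_plus _ _ _ H1 H2). Qed.

Lemma cont2_mult (f g : R -> R -> R) t x : cont2 f t x -> cont2 g t x ->
  cont2 (fun t x => f t x * g t x) t x.
Proof. intros H1 H2. unfold cont2 in *. apply (continuous_mult _ _ _ H1 H2). Qed.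

Lemma cont2_const c t x : cont2 (fun _ _ => c) t x.
Proof. unfold cont2. apply continuous_const. Qed.

Lemma cont2_t (u : R -> R) t x : continuous u t -> cont2 (fun t _ => u t) t x.
Proof.
  intros H. unfold cont2. apply (continuous_comp (fun p : R * R => fst p) u).
  apply continuous_fst. exact H.
Qed.

Lemma cont2_x (u : R -> R) t x : continuous u x -> cont2 (fun _ x => u x) t x.
Proof.
  intros H. unfold cont2. apply (continuous_comp (fun p : R * R => snd p) u).
  apply continuous_snd. exact H.
Qed.

Lemma continuous_affine a b t : continuous (fun s : R => a + b * s) t.
Proof.
  apply (continuous_plus (fun _ => a) (fun s => b * s)).
  apply continuous_const.
  apply (continuous_mult (fun _ => b) (fun s => s)). apply continuous_const. apply continuous_id.
Qed.

Lemma cont2_affine (K : R -> R -> R) a0 a1 b0 b1 t x :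
  cont2 K (a0 + a1 * t) (b0 + b1 * x) ->
  cont2 (fun t x => K (a0 + a1 * t) (b0 + b1 * x)) t x.
Proof.
  intros H. unfold cont2 in *.
  apply (continuous_comp_2 (fun p : R * R => a0 + a1 * fst p) (fun p : R * R => b0 + b1 * snd p) K).
  - apply (continuous_comp (fun p : R * R => fst p) (fun s => a0 + a1 * s)).
    apply continuous_fst. apply continuous_affine.
  - apply (continuous_comp (fun p : R * R => snd p) (fun s => b0 + b1 * s)).
    apply continuous_snd. apply continuous_affine.
  - exact H.
Qed.

Definition C1pt (h : R -> R -> R) t x : Prop :=
  ex_derive (fun s => h s x) t /\ ex_derive (fun y => h t y) x /\
  cont2 h t x /\ cont2 (dt h) t x /\ cont2 (dx h) t x.

Definition C1D (D : R -> Prop) (h : R -> R -> R) := forall t x, D t -> C1pt h t x.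

Definition Dopen (D : R -> Prop) := forall t, D t -> exists eps, 0 < eps /\
  forall t', Rabs (t' - t) < eps -> D t'.

Lemma Dopen_True : Dopen (fun _ => True).
Proof. intros t _. exists 1. split; [lra|auto]. Qed.

Lemma Dopen_pos : Dopen Omega0.
Proof.
  intros t Ht. unfold Omega0 in *. exists t. split; [lra|].
  intros t' H. apply Rabs_def2 in H. lra.
Qed.

Lemma dt_ext_box (h g : R -> R -> R) t0 x0 eps : 0 < eps ->
  (forall t x, Rabs (t - t0) < eps -> Rabs (x - x0) < eps -> h t x = g t x) ->
  forall t x, Rabs (t - t0) < eps/2 -> Rabs (x - x0) < eps/2 ->
   dt h t x = dt g t x /\ dx h t x = dx g t x.
Proof.
  intros He Heq t x Ht Hx. unfold dt, dx. split; apply Derive_ext_loc.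
  - apply (locally_R t (eps/2)); [lra|]. intros s Hs. apply Heq.
    replace (s - t0) with ((s - t) + (t - t0)) by ring.
    eapply Rle_lt_trans; [apply Rabs_triang|lra]. lra.
  - apply (locally_R x (eps/2)); [lra|]. intros s Hs. apply Heq. lra.
    replace (s - x0) with ((s - x) + (x - x0)) by ring.
    eapply Rle_lt_trans; [apply Rabs_triang|lra].
Qed.

Lemma C1pt_ext_box (h g : R -> R -> R) t0 x0 eps : 0 < eps ->
  (forall t x, Rabs (t - t0) < eps -> Rabs (x - x0) < eps -> h t x = g t x) ->
  C1pt g t0 x0 -> C1pt h t0 x0.
Proof.
  intros He Heq [H1 [H2 [H3 [H4 H5]]]].
  assert (Z : forall a, Rabs (a - a) < eps/2) by (intros; rewrite Rminus_diag, Rabs_R0; lra).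
  split; [|split; [|split; [|split]]].
  - apply (ex_derive_ext_loc (fun s => g s x0)); [|exact H1].
    apply (locally_R t0 eps); auto. intros s Hs. symmetry; apply Heq; auto.
    rewrite Rminus_diag, Rabs_R0; lra.
  - apply (ex_derive_ext_loc (fun s => g t0 s)); [|exact H2].
    apply (locally_R x0 eps); auto. intros s Hs. symmetry; apply Heq; auto.
    rewrite Rminus_diag, Rabs_R0; lra.
  - apply (cont2_ext_box h g t0 x0 eps); auto.
  - apply (cont2_ext_box (dt h) (dt g) t0 x0 (eps/2)); [lra| |exact H4].
    intros t x Ht Hx. apply (dt_ext_box h g t0 x0 eps); auto.
  - apply (cont2_ext_box (dx h) (dx g) t0 x0 (eps/2)); [lra| |exact H5].
    intros t x Ht Hx. apply (dt_ext_box h g t0 x0 eps); auto.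
Qed.

Lemma C1D_op (op : R -> R -> R) (dop1 dop2 : R -> R -> R -> R -> R) D (f g : R -> R -> R) :
  Dopen D ->
  (forall (u v : R -> R) s, ex_derive u s -> ex_derive v s ->
      ex_derive (fun r => op (u r) (v r)) s /\
      Derive (fun r => op (u r) (v r)) s = dop1 (u s) (v s) (Derive u s) (Derive v s)) ->
  (forall (F G F' G' : R -> R -> R) t x, cont2 F t x -> cont2 G t x -> cont2 F' t x -> cont2 G' t x ->
      cont2 (fun t x => op (F t x) (G t x)) t x /\
      cont2 (fun t x => dop1 (F t x) (G t x) (F' t x) (G' t x)) t x) ->
  C1D D f -> C1D D g -> C1D D (fun t x => op (f t x) (g t x)).
Proof.
  intros HD Hder Hc Hf Hg t0 x0 Ht0.
  destruct (HD t0 Ht0) as [eps [He HDe]].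
  assert (Hdt : forall t x, Rabs (t - t0) < eps ->
     dt (fun t x => op (f t x) (g t x)) t x = dop1 (f t x) (g t x) (dt f t x) (dt g t x)
  /\ dx (fun t x => op (f t x) (g t x)) t x = dop1 (f t x) (g t x) (dx f t x) (dx g t x)).
  { intros t x Ht. destruct (Hf t x (HDe t Ht)) as [F1 [F2 _]].
    destruct (Hg t x (HDe t Ht)) as [G1 [G2 _]].
    unfold dt, dx. split; [apply (Hder (fun s => f s x) (fun s => g s x))|apply (Hder (fun s => f t s) (fun s => g t s))]; auto. }
  destruct (Hf t0 x0 Ht0) as [F1 [F2 [F3 [F4 F5]]]].
  destruct (Hg t0 x0 Ht0) as [G1 [G2 [G3 [G4 G5]]]].
  split; [|split; [|split; [|split]]].
  - apply (Hder (fun s => f s x0) (fun s => g s x0)); auto.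
  - apply (Hder (fun s => f t0 s) (fun s => g t0 s)); auto.
  - apply (Hc f g f f); auto.
  - apply (cont2_ext_box _ (fun t x => dop1 (f t x) (g t x) (dt f t x) (dt g t x)) t0 x0 eps He).
    intros t x Ht _. apply Hdt; auto.
    apply (Hc f g (dt f) (dt g)); auto.
  - apply (cont2_ext_box _ (fun t x => dop1 (f t x) (g t x) (dx f t x) (dx g t x)) t0 x0 eps He).
    intros t x Ht _. apply Hdt; auto.
    apply (Hc f g (dx f) (dx g)); auto.
Qed.

Lemma C1D_mult D f g : Dopen D -> C1D D f -> C1D D g -> C1D D (fun t x => f t x * g t x).
Proof.
  intros HD. apply (C1D_op Rmult (fun a b a' b' => a' * b + a * b')); auto.
  - intros u v s Hu Hv. split. apply ex_derive_mult; auto. apply Derive_mult; auto.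
  - intros F G F' G' t x H1 H2 H3 H4. split. apply cont2_mult; auto.
    apply cont2_plus; apply cont2_mult; auto.
Qed.

Lemma C1D_plus D f g : Dopen D -> C1D D f -> C1D D g -> C1D D (fun t x => f t x + g t x).
Proof.
  intros HD. apply (C1D_op Rplus (fun a b a' b' => a' + b')); auto.
  - intros u v s Hu Hv. split. apply (ex_derive_plus u v); auto. apply (Derive_plus u v); auto.
  - intros F G F' G' t x H1 H2 H3 H4. split; apply cont2_plus; auto.
Qed.

Lemma Derive_affine a0 a1 t : Derive (fun s => a0 + a1 * s) t = a1.
Proof. apply is_derive_unique. auto_derive; auto. ring. Qed.

Lemma ex_derive_affine a0 a1 t : ex_derive (fun s => a0 + a1 * s) t.
Proof. eexists. apply (is_derive_Reals). apply derivable_pt_lim_plus. apply derivable_pt_lim_const.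
 apply derivable_pt_lim_scal. apply derivable_pt_lim_id. Qed.

Lemma dt_mult f g t x : ex_derive (fun s => f s x) t -> ex_derive (fun s => g s x) t ->
  dt (fun t x => f t x * g t x) t x = dt f t x * g t x + f t x * dt g t x.
Proof. intros. unfold dt. apply (Derive_mult (fun s => f s x) (fun s => g s x)); auto. Qed.

Lemma dx_mult f g t x : ex_derive (fun s => f t s) x -> ex_derive (fun s => g t s) x ->
  dx (fun t x => f t x * g t x) t x = dx f t x * g t x + f t x * dx g t x.
Proof. intros. unfold dx. apply (Derive_mult (fun s => f t s) (fun s => g t s)); auto. Qed.

Lemma C1D_const D c : C1D D (fun _ _ => c).
Proof.
  intros t x _. unfold dt, dx. split; [|split; [|split; [|split]]].
  apply ex_derive_const. apply ex_derive_const. apply cont2_const.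
  apply (cont2_ext_box _ (fun _ _ => 0) t x 1); [lra| |apply cont2_const].
  intros; unfold dt, dx; apply Derive_const.
  apply (cont2_ext_box _ (fun _ _ => 0) t x 1); [lra| |apply cont2_const].
  intros; unfold dt, dx; apply Derive_const.
Qed.

Lemma C1D_t D (u : R -> R) : (forall s, ex_derive u s) -> (forall s, continuous (Derive u) s) ->
  C1D D (fun t _ => u t).
Proof.
  intros H1 H2 t x _. split; [|split; [|split; [|split]]].
  - apply H1.
  - apply ex_derive_const.
  - apply cont2_t. apply (@ex_derive_continuous R_AbsRing R_NormedModule). apply H1.
  - apply (cont2_ext_box _ (fun t _ => Derive u t) t x 1); [lra| |].
    intros; reflexivity. apply (cont2_t (Derive u)). apply H2.
  - apply (cont2_ext_box _ (fun _ _ => 0) t x 1); [lra| |apply cont2_const].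
    intros; unfold dx; apply Derive_const.
Qed.

Lemma C1D_x D (u : R -> R) : (forall s, ex_derive u s) -> (forall s, continuous (Derive u) s) ->
  C1D D (fun _ x => u x).
Proof.
  intros H1 H2 t x _. split; [|split; [|split; [|split]]].
  - apply ex_derive_const.
  - apply H1.
  - apply cont2_x. apply (@ex_derive_continuous R_AbsRing R_NormedModule). apply H1.
  - apply (cont2_ext_box _ (fun _ _ => 0) t x 1); [lra| |apply cont2_const].
    intros; unfold dt; apply Derive_const.
  - apply (cont2_ext_box _ (fun _ x => Derive u x) t x 1); [lra| |].
    intros; reflexivity. apply (cont2_x (Derive u)). apply H2.
Qed.

Lemma C1D_scal D c f : Dopen D -> C1D D f -> C1D D (fun t x => c * f t x).
Proof. intros HD Hf. apply (C1D_mult D (fun _ _ => c) f); auto. apply C1D_const. Qed.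

Lemma dt_affine (K : R -> R -> R) a0 a1 b0 b1 t x :
  ex_derive (fun s => K s (b0 + b1 * x)) (a0 + a1 * t) ->
  dt (fun t x => K (a0 + a1 * t) (b0 + b1 * x)) t x = a1 * dt K (a0 + a1 * t) (b0 + b1 * x).
Proof.
  intros H. unfold dt.
  rewrite (Derive_comp (fun s => K s (b0 + b1 * x)) (fun s => a0 + a1 * s)); auto.
  rewrite Derive_affine; auto. apply ex_derive_affine.
Qed.

Lemma dx_affine (K : R -> R -> R) a0 a1 b0 b1 t x :
  ex_derive (fun s => K (a0 + a1 * t) s) (b0 + b1 * x) ->
  dx (fun t x => K (a0 + a1 * t) (b0 + b1 * x)) t x = b1 * dx K (a0 + a1 * t) (b0 + b1 * x).
Proof.
  intros H. unfold dx.
  rewrite (Derive_comp (fun s => K (a0 + a1 * t) s) (fun s => b0 + b1 * s)); auto.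
  rewrite Derive_affine; auto. apply ex_derive_affine.
Qed.

Lemma C1D_affine (K : R -> R -> R) a0 a1 b0 b1 : C1D (fun _ => True) K ->
  C1D (fun _ => True) (fun t x => K (a0 + a1 * t) (b0 + b1 * x)).
Proof.
  intros HK t x _. destruct (HK (a0 + a1 * t) (b0 + b1 * x) I) as [H1 [H2 [H3 [H4 H5]]]].
  split; [|split; [|split; [|split]]].
  - apply (ex_derive_comp (fun s => K s (b0 + b1 * x)) (fun s => a0 + a1 * s)); auto.
    apply ex_derive_affine.
  - apply (ex_derive_comp (fun s => K (a0 + a1 * t) s) (fun s => b0 + b1 * s)); auto.
    apply ex_derive_affine.
  - apply (cont2_affine K); auto.
  - apply (cont2_ext_box _ (fun t x => a1 * dt K (a0 + a1 * t) (b0 + b1 * x)) t x 1); [lra| |].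
    intros t' x' _ _. apply dt_affine. destruct (HK (a0+a1*t') (b0+b1*x') I) as [Q _]; exact Q.
    apply (cont2_mult (fun _ _ => a1) (fun t x => dt K (a0 + a1 * t) (b0 + b1 * x))).
    apply cont2_const. apply (cont2_affine (dt K)); auto.
  - apply (cont2_ext_box _ (fun t x => b1 * dx K (a0 + a1 * t) (b0 + b1 * x)) t x 1); [lra| |].
    intros t' x' _ _. apply dx_affine. destruct (HK (a0+a1*t') (b0+b1*x') I) as [_ [Q _]]; exact Q.
    apply (cont2_mult (fun _ _ => b1) (fun t x => dx K (a0 + a1 * t) (b0 + b1 * x))).
    apply cont2_const. apply (cont2_affine (dx K)); auto.
Qed.

Definition mp (w : R) : R := (w + Rabs w) / 2.
Definition qq (w : R) : R := mp w * mp w.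

Lemma mp_pos w : 0 <= w -> mp w = w.
Proof. intros; unfold mp; rewrite Rabs_right; lra. Qed.
Lemma mp_neg w : w <= 0 -> mp w = 0.
Proof. intros; unfold mp; rewrite Rabs_left1; lra. Qed.

Lemma continuous_mp w : continuous mp w.
Proof.
  unfold mp.
  apply (continuous_mult (fun w => w + Rabs w) (fun _ => / 2)).
  apply (continuous_plus (fun w => w) Rabs). apply continuous_id. apply continuous_Rabs.
  apply continuous_const.
Qed.

Lemma is_derive_qq w : is_derive qq w (2 * mp w).
Proof.
  destruct (Rlt_or_le 0 w) as [Hp|Hn]; [|destruct (Rlt_or_le w 0) as [Hn'|H0]].
  - apply (is_derive_ext_loc (fun s => s * s)).
    exists (mkposreal w Hp). intros s Hs. unfold ball in Hs; simpl in Hs.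
    unfold AbsRing_ball, abs, minus, plus, opp in Hs; simpl in Hs.
    apply Rabs_def2 in Hs. unfold qq. rewrite mp_pos; lra.
    rewrite mp_pos by lra. auto_derive; auto. ring.
  - apply (is_derive_ext_loc (fun s => 0)).
    assert (Hp : 0 < - w) by lra.
    exists (mkposreal (-w) Hp). intros s Hs. unfold ball in Hs; simpl in Hs.
    unfold AbsRing_ball, abs, minus, plus, opp in Hs; simpl in Hs.
    apply Rabs_def2 in Hs. unfold qq. rewrite mp_neg; lra.
    rewrite mp_neg by lra. replace (2 * 0) with 0 by ring. apply (@is_derive_const R_AbsRing R_NormedModule).
  - assert (w = 0) by lra. subst w. apply is_derive_Reals.
    intros eps He. exists (mkposreal eps He). intros h Hh0 Hh. simpl in Hh.
    unfold qq. rewrite (mp_pos 0) by lra. rewrite Rplus_0_l.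
    replace (2 * 0) with 0 by ring. rewrite Rmult_0_l, Rminus_0_r, Rminus_0_r.
    destruct (Rle_or_lt 0 h).
    + rewrite mp_pos by lra. replace (h * h / h) with h by (field; auto).
      rewrite Rabs_right; apply Rabs_def2 in Hh; lra.
    + rewrite mp_neg by lra. replace (0 * 0 / h) with 0 by (field; auto).
      rewrite Rabs_R0; lra.
Qed.

Definition psi (w : R) : R :=
  2 * qq (w + 1) - 4 * qq (w + 1/2) + 4 * qq (w - 1/2) - 2 * qq (w - 1).
Definition dpsi (w : R) : R :=
  4 * mp (w + 1) - 8 * mp (w + 1/2) + 8 * mp (w - 1/2) - 4 * mp (w - 1).

Lemma is_derive_psi w : is_derive psi w (dpsi w).
Proof.
  unfold psi, dpsi.
  assert (G : forall c k, is_derive (fun w => k * qq (w + c)) w (2 * k * mp (w + c))).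
  { intros c k. replace (2 * k * mp (w + c)) with (k * (1 * (2 * mp (w + c)))) by ring.
    apply (is_derive_scal (fun w => qq (w + c))).
    apply (is_derive_comp qq (fun w => w + c)). apply is_derive_qq.
    auto_derive; auto. }
  assert (G' : forall c k, is_derive (fun w => k * qq (w - c)) w (2 * k * mp (w - c))).
  { intros c k. replace (2 * k * mp (w - c)) with (k * (1 * (2 * mp (w - c)))) by ring.
    apply (is_derive_scal (fun w => qq (w - c))).
    apply (is_derive_comp qq (fun w => w - c)). apply is_derive_qq.
    auto_derive; auto. }
  replace (4 * mp (w + 1) - 8 * mp (w + 1 / 2) + 8 * mp (w - 1 / 2) - 4 * mp (w - 1))
    with (2*2 * mp (w + 1) - 2*4 * mp (w + 1 / 2) + 2*4 * mp (w - 1 / 2) - 2*2 * mp (w - 1))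
    by ring.
  change (is_derive (fun w => minus (plus (minus (2*qq(w+1)) (4*qq(w+1/2))) (4*qq(w-1/2))) (2*qq(w-1))) w
    (minus (plus (minus (2*2*mp(w+1)) (2*4*mp(w+1/2))) (2*4*mp(w-1/2))) (2*2*mp(w-1)))).
  apply (@is_derive_minus R_AbsRing R_NormedModule); [apply (@is_derive_plus R_AbsRing R_NormedModule); [apply (@is_derive_minus R_AbsRing R_NormedModule)|]|].
  apply G. apply G. apply G'. apply G'.
Qed.

Lemma ex_derive_psi w : ex_derive psi w.
Proof. eexists; apply is_derive_psi. Qed.

Lemma Derive_psi w : Derive psi w = dpsi w.
Proof. apply is_derive_unique, is_derive_psi. Qed.

Lemma continuous_dpsi w : continuous dpsi w.
Proof.
  unfold dpsi.
  assert (G : forall c k, continuous (fun w => k * mp (w + c)) w).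
  { intros c k. apply (continuous_mult (fun _ => k) (fun w => mp (w + c))).
    apply continuous_const.
    apply (continuous_comp (fun w => w + c) mp).
    apply (continuous_plus (fun w => w) (fun _ => c)). apply continuous_id. apply continuous_const.
    apply continuous_mp. }
  assert (G' : forall c k, continuous (fun w => k * mp (w - c)) w).
  { intros c k. apply (continuous_mult (fun _ => k) (fun w => mp (w - c))).
    apply continuous_const.
    apply (continuous_comp (fun w => w - c) mp).
    apply (continuous_minus (fun w => w) (fun _ => c)). apply continuous_id. apply continuous_const.
    apply continuous_mp. }
  change (continuous (fun w => minus (plus (minus (4 * mp (w + 1)) (8 * mp (w + 1/2))) (8 * mp (w - 1/2))) (4 * mp (w - 1))) w).
  apply (@continuous_minus R_UniformSpace R_AbsRing R_NormedModule); [apply (@continuous_plus R_UniformSpace R_AbsRing R_NormedModule); [apply (@continuous_minus R_UniformSpace R_AbsRing R_NormedModule)|]|].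
  apply G. apply G. apply G'. apply G'.
Qed.

Lemma continuous_Derive_psi w : continuous (Derive psi) w.
Proof.
  apply (continuous_ext dpsi). intros; symmetry; apply Derive_psi. apply continuous_dpsi.
Qed.

Ltac mpcase :=
  repeat match goal with
  | |- context [mp ?a] =>
      let H := fresh in destruct (Rle_or_lt 0 a) as [H|H];
      [rewrite (mp_pos a H)|rewrite (mp_neg a (Rlt_le _ _ H))]
  end.

Lemma psi_zero w : 1 <= Rabs w -> psi w = 0.
Proof.
  intros H. unfold psi, qq. destruct (Rle_or_lt 0 w).
  - rewrite Rabs_right in H by lra. mpcase; lra || nra.
  - rewrite Rabs_left in H by lra. mpcase; lra || nra.
Qed.

Lemma psi_bound w : Rabs (psi w) <= 1.
Proof. unfold psi, qq. apply Rabs_le. mpcase; split; nra. Qed.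

Lemma dpsi_bound w : Rabs (dpsi w) <= 2.
Proof. unfold dpsi. apply Rabs_le. mpcase; split; nra. Qed.

Lemma psi_sum p : 0 <= p <= 1 -> psi p + psi (p - 1) = 1.
Proof. intros H. unfold psi, qq. mpcase; nra. Qed.

Lemma Zgap (z1 z2 : Z) : IZR z1 < IZR z2 + 1 -> IZR z1 <= IZR z2.
Proof.
  intros H. rewrite <- plus_IZR in H. apply lt_IZR in H. apply IZR_le. lia.
Qed.

Lemma Int_part_spec r : IZR (Int_part r) <= r < IZR (Int_part r) + 1.
Proof. destruct (base_Int_part r). lra. Qed.

Lemma Int_part_unique r z : IZR z <= r < IZR z + 1 -> Int_part r = z.
Proof.
  intros H. destruct (Int_part_spec r) as [H1 H2].
  assert (A1 : IZR (Int_part r) <= IZR z) by (apply Zgap; lra).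
  assert (A2 : IZR z <= IZR (Int_part r)) by (apply Zgap; lra).
  apply le_IZR in A1. apply le_IZR in A2. lia.
Qed.

Lemma repT_range u : -1/2 <= repT u < 1/2.
Proof. unfold repT. destruct (Int_part_spec (u + 1/2)). lra. Qed.

Lemma repT_id u : -1/2 <= u < 1/2 -> repT u = u.
Proof.
  intros H. unfold repT. rewrite (Int_part_unique _ 0); simpl; lra.
Qed.

Lemma repT_shift u k : repT (u + IZR k) = repT u.
Proof.
  unfold repT. rewrite (Int_part_unique (u + IZR k + 1/2) (Int_part (u + 1/2) + k)).
  rewrite plus_IZR. ring.
  rewrite plus_IZR. destruct (Int_part_spec (u + 1/2)). lra.
Qed.

Lemma repT_plus1 u : repT (u + 1) = repT u.
Proof. apply (repT_shift u 1). Qed.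

Lemma dT_le x y k : dT x y <= Rabs (x - y - IZR k).
Proof.
  unfold dT, frac_part. set (d := x - y). destruct (Int_part_spec d) as [H1 H2].
  set (I := Int_part d) in *.
  destruct (Z.le_gt_cases k I) as [Hk|Hk].
  - apply IZR_le in Hk. eapply Rle_trans; [apply Rmin_l|]. rewrite Rabs_right; lra.
  - assert (Hk' : IZR I + 1 <= IZR k) by (rewrite <- plus_IZR; apply IZR_le; lia).
    eapply Rle_trans; [apply Rmin_r|]. rewrite Rabs_left1; lra.
Qed.

Lemma dT_eq x y : exists k, dT x y = Rabs (x - y - IZR k).
Proof.
  unfold dT, frac_part. set (d := x - y). destruct (Int_part_spec d) as [H1 H2].
  set (I := Int_part d) in *.
  destruct (Rle_or_lt (d - IZR I) (1 - (d - IZR I))).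
  - exists I. rewrite Rmin_left by lra. rewrite Rabs_right; lra.
  - exists (I + 1)%Z. rewrite Rmin_right by lra. rewrite plus_IZR. rewrite Rabs_left1; lra.
Qed.

Lemma dT_triang x y z : dT x z <= dT x y + dT y z.
Proof.
  destruct (dT_eq x y) as [k1 E1]. destruct (dT_eq y z) as [k2 E2].
  rewrite E1, E2. eapply Rle_trans; [apply (dT_le x z (k1 + k2))|].
  rewrite plus_IZR. replace (x - z - (IZR k1 + IZR k2)) with ((x - y - IZR k1) + (y - z - IZR k2)) by ring.
  apply Rabs_triang.
Qed.

Lemma dT_repT x y : dT x y <= Rabs (repT (x - y)).
Proof.
  unfold repT. replace (x - y - IZR (Int_part (x - y + 1/2))) with (x - y - IZR (Int_part (x - y + 1/2))) by ring.
  apply dT_le.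
Qed.

Definition per (H : R -> R -> R) (a b : R) : R := H a (repT b).

Lemma per_local (H : R -> R -> R) :
  (forall a u, 1/8 < Rabs u -> H a u = 0) ->
  forall b0 b a, Rabs (b - b0) < 1/4 -> H a (repT b) = H a (b - IZR (Int_part (b0 + 1/2))).
Proof.
  intros HV b0 b a Hb. apply Rabs_def2 in Hb.
  destruct (Int_part_spec (b0 + 1/2)) as [M1 M2].
  destruct (Int_part_spec (b + 1/2)) as [N1 N2].
  set (m0 := Int_part (b0 + 1/2)) in *. set (m := Int_part (b + 1/2)) in *.
  unfold repT. fold m.
  destruct (Req_dec (IZR m) (IZR m0)) as [E|E].
  - rewrite E. reflexivity.
  - destruct (Rlt_or_le (IZR m) (IZR m0)) as [L|L].
    + assert (L' : IZR m + 1 <= IZR m0) by (rewrite <- plus_IZR; apply IZR_le; apply lt_IZR in L; lia).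
      assert (L2 : IZR m0 <= IZR m + 1) by (rewrite <- plus_IZR; apply Zgap; rewrite plus_IZR; lra).
      rewrite !HV. reflexivity.
      rewrite Rabs_left; lra. rewrite Rabs_right; lra.
    + assert (L' : IZR m0 + 1 <= IZR m) by (rewrite <- plus_IZR; apply IZR_le; assert (IZR m0 < IZR m) by lra; apply lt_IZR in H0; lia).
      assert (L2 : IZR m <= IZR m0 + 1) by (rewrite <- plus_IZR; apply Zgap; rewrite plus_IZR; lra).
      rewrite !HV. reflexivity.
      rewrite Rabs_right; lra. rewrite Rabs_left; lra.
Qed.

Lemma repT_b0 b0 : repT b0 = b0 - IZR (Int_part (b0 + 1/2)).
Proof. reflexivity. Qed.

Lemma per_C1 (H : R -> R -> R) :
  (forall a u, 1/8 < Rabs u -> H a u = 0) -> C1D (fun _ => True) H ->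
  C1D (fun _ => True) (per H) /\
  (forall a b, dx (per H) a b = dx H a (repT b)).
Proof.
  intros HV HC. split.
  - intros a0 b0 _. set (m0 := IZR (Int_part (b0 + 1/2))).
    apply (C1pt_ext_box (per H) (fun a b => H (0 + 1 * a) (- m0 + 1 * b)) a0 b0 (1/4)); [lra| |].
    + intros a b _ Hb. unfold per. rewrite (per_local H HV b0 b a Hb). unfold m0; f_equal; ring.
    + apply (C1D_affine H 0 1 (- m0) 1 HC a0 b0 I).
  - intros a b0. set (m0 := IZR (Int_part (b0 + 1/2))).
    unfold dx at 1. rewrite (Derive_ext_loc _ (fun y => H (0 + 1 * a) (- m0 + 1 * y))).
    + change (dx (fun a b => H (0 + 1 * a) (- m0 + 1 * b)) a b0 = dx H a (repT b0)).
      rewrite dx_affine. rewrite repT_b0. rewrite Rmult_1_l. unfold m0; f_equal; ring.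
      destruct (HC (0 + 1 * a) (- m0 + 1 * b0) I) as [_ [Q _]]; exact Q.
    + apply (locally_R b0 (1/4)); [lra|]. intros b Hb. unfold per.
      rewrite (per_local H HV b0 b a Hb). unfold m0; f_equal; ring.
Qed.

Lemma per_periodic H : periodic_x (fun _ => True) (per H).
Proof. intros a b _. unfold per. rewrite repT_plus1. reflexivity. Qed.

Lemma phi_ex_derive phi : dyadic_partition phi -> forall r, ex_derive phi r.
Proof. intros [H _] r. exact (H 1%nat r). Qed.

Lemma phi_cont_derive phi : dyadic_partition phi -> forall r, continuous (Derive phi) r.
Proof.
  intros [H _] r. apply (@ex_derive_continuous R_AbsRing R_NormedModule). exact (H 2%nat r).
Qed.

Lemma phi_zero phi : dyadic_partition phi -> forall r, (r <= 1/16 \/ 1/4 <= r) -> phi r = 0.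
Proof. intros [_ [_ [H _]]] r Hr. apply H. lra. Qed.

Lemma phi_01 phi : dyadic_partition phi -> forall r, 0 <= phi r <= 1.
Proof. intros [_ [H _]] r. apply H. Qed.

Lemma Derive_phi_out phi : dyadic_partition phi -> forall r, (r < 0 \/ 1 < r) -> Derive phi r = 0.
Proof.
  intros Hp r Hr. rewrite (Derive_ext_loc phi (fun _ => 0)). apply Derive_const.
  destruct Hr as [Hr|Hr].
  - apply (locally_R r (-r)); [lra|]. intros s Hs. apply Rabs_def2 in Hs.
    apply (phi_zero phi Hp). lra.
  - apply (locally_R r (r - 1)); [lra|]. intros s Hs. apply Rabs_def2 in Hs.
    apply (phi_zero phi Hp). lra.
Qed.

Lemma phi_bound phi : dyadic_partition phi -> exists L, 0 <= L /\ forall r, Rabs (Derive phi r) <= L.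
Proof.
  intros Hp.
  destruct (continuity_ab_maj (fun r => Rabs (Derive phi r)) 0 1) as [M [HM _]]; [lra| |].
  - intros c _. apply continuity_pt_filterlim.
    apply (continuous_Rabs_comp (Derive phi)). apply (phi_cont_derive phi Hp).
  - exists (Rabs (Derive phi M)). split. apply Rabs_pos.
    intros r. destruct (Rlt_or_le r 0); [|destruct (Rlt_or_le 1 r)].
    + rewrite (Derive_phi_out phi Hp r) by lra. rewrite Rabs_R0. apply Rabs_pos.
    + rewrite (Derive_phi_out phi Hp r) by lra. rewrite Rabs_R0. apply Rabs_pos.
    + apply HM. lra.
Qed.

Lemma is_derive_dil (u : R -> R) c t : ex_derive u (c * t) ->
  is_derive (fun t => u (c * t)) t (c * Derive u (c * t)).
Proof.
  intros H. replace (c * Derive u (c * t)) with (scal c (Derive u (c * t))) by reflexivity.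
  apply (is_derive_comp u (fun t => c * t)). apply Derive_correct, H.
  auto_derive; auto. ring.
Qed.

Section fnsec.
Variable phi : R -> R.
Hypothesis Hp : dyadic_partition phi.
Variable n : nat.

Definition un (t : R) := phi (2 ^ n * t).

Lemma un_ex t : ex_derive un t.
Proof. eexists. apply is_derive_dil. apply (phi_ex_derive phi Hp). Qed.

Lemma un_Derive t : Derive un t = 2 ^ n * Derive phi (2 ^ n * t).
Proof. apply is_derive_unique. apply is_derive_dil. apply (phi_ex_derive phi Hp). Qed.

Lemma un_cont t : continuous (Derive un) t.
Proof.
  apply (continuous_ext (fun t => 2 ^ n * Derive phi (2 ^ n * t))).
  intros; symmetry; apply un_Derive.
  apply (continuous_mult (fun _ => 2 ^ n) (fun t => Derive phi (2 ^ n * t))).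
  apply continuous_const.
  apply (continuous_comp (fun t => 2 ^ n * t) (Derive phi)).
  apply (continuous_mult (fun _ => 2 ^ n) (fun t => t)). apply continuous_const. apply continuous_id.
  apply (phi_cont_derive phi Hp).
Qed.

Lemma pow2_pos : 0 < 2 ^ n.
Proof. apply pow_lt; lra. Qed.

Lemma fn_support f t x : (t <= / 2 ^ n / 16 \/ / 2 ^ n / 4 <= t) -> fn phi f n t x = 0.
Proof.
  intros Ht. unfold fn. destruct (Rlt_dec 0 t); [|reflexivity].
  rewrite (phi_zero phi Hp). ring.
  assert (P := pow2_pos).
  destruct Ht as [Ht|Ht]; [left|right].
  - apply (Rmult_le_compat_l (2 ^ n)) in Ht; [|lra].
    replace (2 ^ n * (/ 2 ^ n / 16)) with (1/16) in Ht by (field; lra). exact Ht.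
  - apply (Rmult_le_compat_l (2 ^ n)) in Ht; [|lra].
    replace (2 ^ n * (/ 2 ^ n / 4)) with (1/4) in Ht by (field; lra). exact Ht.
Qed.

Lemma fn_C1 f : C1_on Omega0 f -> C1D (fun _ => True) (fn phi f n).
Proof.
  intros [_ Hf].
  assert (HG : C1D Omega0 (fun t x => f t x * un t)).
  { apply C1D_mult. apply Dopen_pos. exact Hf. apply C1D_t. apply un_ex. apply un_cont. }
  intros t0 x0 _. destruct (Rlt_or_le 0 t0) as [Ht|Ht].
  - apply (C1pt_ext_box _ (fun t x => f t x * un t) t0 x0 t0 Ht).
    intros t x H1 _. apply Rabs_def2 in H1. unfold fn. destruct (Rlt_dec 0 t); [reflexivity|lra].
    apply HG. exact Ht.
  - assert (P := pow2_pos). assert (Q : 0 < / 2 ^ n / 16) by (apply Rdiv_lt_0_compat; [apply Rinv_0_lt_compat|]; lra).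
    apply (C1pt_ext_box _ (fun _ _ => 0) t0 x0 (/ 2 ^ n / 16) Q).
    intros t x H1 _. apply Rabs_def2 in H1. apply fn_support. lra.
    exact (C1D_const (fun _ => True) 0 t0 x0 I).
Qed.

Lemma periodic_int (h : R -> R) : (forall x, h (x + 1) = h x) -> forall k x, h (x + IZR k) = h x.
Proof.
  intros H.
  assert (Hn : forall m x, h (x + INR m) = h x).
  { induction m; intros x. simpl. rewrite Rplus_0_r. reflexivity.
    rewrite S_INR. replace (x + (INR m + 1)) with ((x + INR m) + 1) by ring. rewrite H. apply IHm. }
  intros k x. destruct k.
  - simpl. rewrite Rplus_0_r. reflexivity.
  - rewrite <- positive_nat_Z, <- INR_IZR_INZ. apply Hn.
  - replace (IZR (Z.neg p)) with (- INR (Pos.to_nat p)).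
    rewrite <- (Hn (Pos.to_nat p) (x + - INR (Pos.to_nat p))). f_equal. ring.
    rewrite <- Pos2Z.opp_pos, opp_IZR, <- positive_nat_Z, <- INR_IZR_INZ. reflexivity.
Qed.

Lemma fn_periodic f : periodic_x Omega0 f -> forall t k x, fn phi f n t (x + IZR k) = fn phi f n t x.
Proof.
  intros Hper t k x. unfold fn. destruct (Rlt_dec 0 t) as [Ht|Ht]; [|reflexivity].
  f_equal. apply (periodic_int (fun x => f t x)). intros y. apply Hper. exact Ht.
Qed.

End fnsec.

Lemma sup_ub D h r : supnorm_on D h = Finite r -> forall t x, D t -> Rabs (h t x) <= r.
Proof.
  intros E t x Ht. destruct (Lub_Rbar_correct (fun y => exists t x, D t /\ y = Rabs (h t x))) as [U _].
  unfold supnorm_on in E. rewrite E in U. apply (U (Rabs (h t x))). exists t, x. auto.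
Qed.

Lemma sup_bound D h B : (exists t, D t) -> (forall t x, D t -> Rabs (h t x) <= B) ->
  exists r, supnorm_on D h = Finite r /\ 0 <= r <= B.
Proof.
  intros [t0 Ht0] HB. unfold supnorm_on.
  destruct (Lub_Rbar_correct (fun y => exists t x, D t /\ y = Rabs (h t x))) as [U L].
  assert (L1 : Rbar_le (Lub_Rbar (fun y => exists t x, D t /\ y = Rabs (h t x))) B).
  { apply L. intros y [t [x [Ht ->]]]. simpl. apply HB; auto. }
  assert (L2 : Rbar_le (Rabs (h t0 0)) (Lub_Rbar (fun y => exists t x, D t /\ y = Rabs (h t x)))).
  { apply U. exists t0, 0. auto. }
  destruct (Lub_Rbar (fun y => exists t x, D t /\ y = Rabs (h t x))) as [r| |]; simpl in *.
  - exists r. split; auto. split; [eapply Rle_trans; [apply Rabs_pos|exact L2]|exact L1].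
  - contradiction.
  - contradiction.
Qed.

Lemma sup_nonneg D h : (exists t, D t) -> Rbar_le 0 (supnorm_on D h).
Proof.
  intros [t0 Ht0]. unfold supnorm_on.
  destruct (Lub_Rbar_correct (fun y => exists t x, D t /\ y = Rabs (h t x))) as [U _].
  eapply Rbar_le_trans; [|apply U; exists t0, 0; split; [exact Ht0|reflexivity]].
  simpl. apply Rabs_pos.
Qed.

Lemma C1norm_parts D h : (exists t, D t) -> is_finite (C1norm_on D h) ->
  exists a b c, supnorm_on D h = Finite a /\ supnorm_on D (dt h) = Finite b /\
    supnorm_on D (dx h) = Finite c /\ 0 <= a /\ 0 <= b /\ 0 <= c /\
    real (C1norm_on D h) = a + b + c.
Proof.
  intros HD Hf. unfold C1norm_on in *.
  assert (N1 := sup_nonneg D h HD). assert (N2 := sup_nonneg D (dt h) HD).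
  assert (N3 := sup_nonneg D (dx h) HD).
  destruct (supnorm_on D h) as [a| |]; destruct (supnorm_on D (dt h)) as [b| |];
  destruct (supnorm_on D (dx h)) as [c| |]; simpl in *; try contradiction;
  unfold is_finite in Hf; simpl in Hf; try discriminate.
  exists a, b, c. repeat split; auto.
Qed.

Definition Bnd (H : R -> R -> R) K1 K2 K3 :=
  (forall a u, Rabs (H a u) <= K1) /\ (forall a u, Rabs (dt H a u) <= K2) /\
  (forall a u, Rabs (dx H a u) <= K3).

Lemma B1_per (H : R -> R -> R) K1 K2 K3 :
  C1D (fun _ => True) H ->
  (forall a u, 1/8 < Rabs u -> H a u = 0) ->
  (forall a u, H a u <> 0 -> Rabs a + Rabs u < 7/32) ->
  Bnd H K1 K2 K3 -> K1 + K2 + K3 <= 1 ->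
  Defs.B1 (per H).
Proof.
  intros HC HV HS [Hb1 [Hb2 Hb3]] Hsum.
  destruct (per_C1 H HV HC) as [PC Pdx].
  split; [split; [split; [apply per_periodic|exact PC]|]|split].
  - exists 1. intros t x Ht. unfold per. destruct (Req_dec (H t (repT x)) 0) as [E|E]; auto.
    apply HS in E. assert (0 <= Rabs (repT x)) by apply Rabs_pos. lra.
  - intros a b Hcl. destruct (Hcl (1/32)) as [a' [b' [Hd Hne]]]; [lra|].
    apply HS in Hne. unfold dist2 in *.
    assert (T1 := dT_triang b b' 0). assert (T2 := dT_repT b' 0).
    rewrite Rminus_0_r in T2.
    assert (T3 : Rabs (a - 0) <= Rabs (a - a') + Rabs a').
    { replace (a - 0) with ((a - a') + a') by ring. apply Rabs_triang. }
    lra.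
  - unfold C1norm_on.
    destruct (sup_bound (fun _ => True) (per H) K1) as [r1 [E1 R1]]. exists 0; auto.
    intros t x _. apply Hb1.
    destruct (sup_bound (fun _ => True) (dt (per H)) K2) as [r2 [E2 R2]]. exists 0; auto.
    intros t x _. apply Hb2.
    destruct (sup_bound (fun _ => True) (dx (per H)) K3) as [r3 [E3 R3]]. exists 0; auto.
    intros t x _. rewrite Pdx. apply Hb3.
    rewrite E1, E2, E3. simpl. lra.
Qed.

Fixpoint ssum (F : nat -> R) (m : nat) : R :=
  match m with O => 0 | S m' => ssum F m' + F m' end.

Lemma ssum_ext F G m : (forall k, (k < m)%nat -> F k = G k) -> ssum F m = ssum G m.
Proof.
  induction m; intros H; simpl; auto. rewrite IHm, H; auto; intros; apply H; lia.
Qed.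

Lemma ssum_plus F G m : ssum (fun k => F k + G k) m = ssum F m + ssum G m.
Proof. induction m; simpl; [ring|rewrite IHm; ring]. Qed.

Lemma ssum_scal c F m : ssum (fun k => c * F k) m = c * ssum F m.
Proof. induction m; simpl; [ring|rewrite IHm; ring]. Qed.

Lemma ssum_tele (A : nat -> R) m : ssum (fun k => A k - A (S k)) m = A O - A m.
Proof. induction m; simpl; [ring|rewrite IHm; ring]. Qed.

Lemma ssum_abs_le F G m : (forall k, (k < m)%nat -> Rabs (F k) <= G k) -> Rabs (ssum F m) <= ssum G m.
Proof.
  induction m; intros H; simpl. rewrite Rabs_R0; lra.
  eapply Rle_trans; [apply Rabs_triang|]. apply Rplus_le_compat. apply IHm; intros; apply H; lia.
  apply H; lia.
Qed.

Lemma ssum_const c m : ssum (fun _ => c) m = INR m * c.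
Proof. induction m; simpl ssum; [simpl; ring|rewrite IHm, S_INR; ring]. Qed.

Definition theta (w : R) : R := 2 * qq w - 4 * qq (w - 1/2) + 2 * qq (w - 1).

Lemma psi_theta (w : R) : psi w = theta (w + 1) - theta w.
Proof.
  unfold psi, theta. replace (w + 1 - 1/2) with (w + 1/2) by lra.
  replace (w + 1 - 1) with w by ring. ring.
Qed.

Lemma theta_1 w : 1 <= w -> theta w = 1.
Proof. intros H. unfold theta, qq. mpcase; nra. Qed.

Lemma theta_0 w : w <= 0 -> theta w = 0.
Proof. intros H. unfold theta, qq. mpcase; nra. Qed.

Lemma psi_tele c m : ssum (fun k => psi (c - INR k)) m = theta (c + 1) - theta (c - INR m + 1).
Proof.
  rewrite (ssum_ext _ (fun k => (fun j => theta (c - INR j + 1)) k - (fun j => theta (c - INR j + 1)) (S k))).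
  rewrite ssum_tele. simpl. f_equal. f_equal. ring.
  intros k _. rewrite psi_theta. rewrite S_INR. f_equal. f_equal. ring.
Qed.

Lemma Rabs_ge w : w <= -1 \/ 1 <= w -> 1 <= Rabs w.
Proof. intros [H|H]; [rewrite Rabs_left by lra|rewrite Rabs_right by lra]; lra. Qed.

Lemma partition (Nn : nat) x : (2 <= Nn)%nat ->
  ssum (fun k => psi (INR Nn * repT (x - (-1/2 + INR k / INR Nn)))) Nn = 1.
Proof.
  intros HN. set (N := INR Nn).
  assert (HN2 : 2 <= N) by (unfold N; replace 2 with (INR 2) by (simpl; ring); apply le_INR; auto).
  set (xt := repT x). destruct (repT_range x) as [X1 X2]. fold xt in X1, X2.
  set (v := N * (xt + 1/2)).
  assert (V1 : 0 <= v) by (unfold v; nra). assert (V2 : v < N) by (unfold v; nra).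
  assert (Hk : forall k, (k < Nn)%nat ->
    psi (N * repT (x - (-1/2 + INR k / N))) = psi (v - INR k) + psi ((v - N) - INR k) + psi ((v + N) - INR k)).
  { intros k Hk. assert (Hk' : INR k < N) by (apply lt_INR; auto).
    assert (K0 : 0 <= INR k) by apply pos_INR.
    set (z := xt + 1/2 - INR k / N).
    assert (Ez : x - (-1/2 + INR k / N) = z + IZR (Int_part (x + 1/2))).
    { unfold z, xt, repT. lra. }
    rewrite Ez, repT_shift.
    assert (Z1 : -1 < z < 1).
    { unfold z. split.
      - assert (E1 : INR k / N * N = INR k) by (field; lra). assert (0 < / N) by (apply Rinv_0_lt_compat; lra). assert (INR k / N < 1) by (unfold Rdiv in *; nra). lra.
      - assert (0 <= INR k / N) by (apply Rmult_le_pos; [lra| left; apply Rinv_0_lt_compat; lra]). lra. }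
    destruct (repT_range z) as [R1 R2].
    assert (Erep : repT z = z - IZR (Int_part (z + 1/2))) by reflexivity.
    destruct (Int_part_spec (z + 1/2)) as [I1 I2].
    set (I := Int_part (z + 1/2)) in *.
    assert (Ia : (-2 < I)%Z) by (apply lt_IZR; simpl; lra).
    assert (Ib : (I < 2)%Z) by (apply lt_IZR; simpl; lra).
    assert (Nz : N * z = v - INR k) by (unfold z, v; field; lra).
    assert (W1 : -N/2 <= N * repT z) by nra. assert (W2 : N * repT z <= N/2) by nra.
    assert (Ew : N * repT z = v - INR k - N * IZR I) by (rewrite Erep, Rmult_minus_distr_l, Nz; reflexivity).
    rewrite Ew in W1, W2 |- *.
    assert (I = -1 \/ I = 0 \/ I = 1)%Z as [E|[E|E]] by lia; rewrite E in W1, W2 |- *; simpl IZR in W1, W2 |- *.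
    - rewrite (psi_zero (v - INR k)), (psi_zero (v - N - INR k)).
      replace (v - INR k - N * -1) with (v + N - INR k) by lra. ring.
      apply Rabs_ge. left. lra. apply Rabs_ge. left. lra.
    - rewrite (psi_zero (v - N - INR k)), (psi_zero (v + N - INR k)).
      replace (v - INR k - N * 0) with (v - INR k) by lra. ring.
      apply Rabs_ge. right. lra. apply Rabs_ge. left. lra.
    - rewrite (psi_zero (v - INR k)), (psi_zero (v + N - INR k)).
      replace (v - INR k - N * 1) with (v - N - INR k) by lra. ring.
      apply Rabs_ge. right. lra. apply Rabs_ge. right. lra. }
  rewrite (ssum_ext _ _ _ Hk). rewrite !ssum_plus. rewrite !psi_tele. fold N.
  rewrite (theta_1 (v + N - N + 1)), (theta_1 (v + N + 1)), (theta_0 (v - N - N + 1)) by lra.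
  replace (v - N + 1) with (v - N + 1) by ring. ring_simplify.
  replace (v + N - N + 1) with (v + 1) by ring. rewrite (theta_1 (v+1)) by lra. ring.
Qed.

Lemma C1D_ext D (h g : R -> R -> R) : (forall t x, h t x = g t x) -> C1D D g -> C1D D h.
Proof.
  intros E Hg t x Ht. apply (C1pt_ext_box h g t x 1); [lra| |apply Hg; auto].
  intros; apply E.
Qed.

Lemma C1c_lin F G a b : C1c F -> C1c G -> C1c (fun t x => a * F t x + b * G t x).
Proof.
  intros [[PF CF] [MF HF]] [[PG CG] [MG HG]]. split; [split|].
  - intros t x _. rewrite PF, PG; auto.
  - apply C1D_plus. apply Dopen_True. apply C1D_scal. apply Dopen_True. exact CF.
    apply C1D_scal. apply Dopen_True. exact CG.
  - exists (Rmax MF MG). intros t x Ht. rewrite HF, HG. ring.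
    eapply Rle_lt_trans; [apply Rmax_r|exact Ht].
    eapply Rle_lt_trans; [apply Rmax_l|exact Ht].
Qed.

Lemma C1c_zero : C1c (fun _ _ => 0).
Proof.
  split; [split|]. intros t x _; reflexivity. exact (C1D_const (fun _ => True) 0).
  exists 0. intros; reflexivity.
Qed.

Lemma C1c_scal c F : C1c F -> C1c (fun t x => c * F t x).
Proof.
  intros H. assert (E : (fun t x => c * F t x) = (fun t x => c * F t x + 0 * (fun _ _ => 0) t x)).
  { apply functional_extensionality; intros t; apply functional_extensionality; intros x. ring. }
  rewrite E. apply C1c_lin; auto. apply C1c_zero.
Qed.

Lemma X_zero X : linear_on_C1c X -> X (fun _ _ => 0) = 0.
Proof.
  intros HX. assert (E := HX (fun _ _ => 0) (fun _ _ => 0) 0 0 C1c_zero C1c_zero).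
  transitivity (X (fun t x => 0 * (fun _ _ => 0) t x + 0 * (fun _ _ : R => 0) t x)).
  f_equal. apply functional_extensionality; intros t; apply functional_extensionality; intros x. ring.
  rewrite E. ring.
Qed.

Lemma X_scal X c F : linear_on_C1c X -> C1c F -> X (fun t x => c * F t x) = c * X F.
Proof.
  intros HX HF. assert (E := HX F (fun _ _ => 0) c 0 HF C1c_zero).
  rewrite X_zero in E by auto.
  transitivity (X (fun t x => c * F t x + 0 * (fun _ _ : R => 0) t x)).
  f_equal. apply functional_extensionality; intros t; apply functional_extensionality; intros x. ring.
  rewrite E. ring.
Qed.

Lemma X_sum X (P : nat -> R -> R -> R) m : linear_on_C1c X -> (forall k, C1c (P k)) ->
  C1c (fun t x => ssum (fun k => P k t x) m) /\
  X (fun t x => ssum (fun k => P k t x) m) = ssum (fun k => X (P k)) m.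
Proof.
  intros HX HP. induction m.
  - split. apply C1c_zero. simpl. apply X_zero; auto.
  - destruct IHm as [C E].
    assert (Ef : (fun t x => ssum (fun k => P k t x) (S m)) =
       (fun t x => 1 * (fun t x => ssum (fun k => P k t x) m) t x + 1 * P m t x)).
    { apply functional_extensionality; intros t; apply functional_extensionality; intros x. simpl. ring. }
    rewrite Ef. split. apply C1c_lin; auto.
    rewrite HX; auto. rewrite E. simpl. ring.
Qed.

Lemma bnd_prod (F Q : R -> R -> R) c0 A0 A1 A2 B0 B1 B2 :
  0 <= c0 -> C1D (fun _ => True) F -> C1D (fun _ => True) Q ->
  Bnd F A0 A1 A2 -> Bnd Q B0 B1 B2 ->
  Bnd (fun a u => c0 * (F a u * Q a u)) (c0 * (A0 * B0)) (c0 * (A1 * B0 + A0 * B1)) (c0 * (A2 * B0 + A0 * B2)).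
Proof.
  intros Hc CF CQ [F0 [F1 F2]] [Q0 [Q1 Q2]].
  assert (P : forall a b c d, Rabs a <= c -> Rabs b <= d -> Rabs (a * b) <= c * d).
  { intros a b c d H1 H2. rewrite Rabs_mult. apply Rmult_le_compat; auto using Rabs_pos. }
  split; [|split]; intros a u.
  - rewrite Rabs_mult, Rabs_pos_eq by auto. apply Rmult_le_compat_l; auto.
  - destruct (CF a u I) as [E1 _]. destruct (CQ a u I) as [E2 _].
    unfold dt. rewrite (Derive_scal (fun s => F s u * Q s u)).
    change (Rabs (c0 * dt (fun a u => F a u * Q a u) a u) <= c0 * (A1 * B0 + A0 * B1)).
    rewrite dt_mult by auto. rewrite Rabs_mult, (Rabs_pos_eq c0) by auto.
    apply Rmult_le_compat_l; auto. eapply Rle_trans; [apply Rabs_triang|].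
    apply Rplus_le_compat; apply P; auto.
  - destruct (CF a u I) as [_ [E1 _]]. destruct (CQ a u I) as [_ [E2 _]].
    unfold dx. rewrite (Derive_scal (fun s => F a s * Q a s)).
    change (Rabs (c0 * dx (fun a u => F a u * Q a u) a u) <= c0 * (A2 * B0 + A0 * B2)).
    rewrite dx_mult by auto. rewrite Rabs_mult, (Rabs_pos_eq c0) by auto.
    apply Rmult_le_compat_l; auto. eapply Rle_trans; [apply Rabs_triang|].
    apply Rplus_le_compat; apply P; auto.
Qed.

Lemma Rpower_inv_pow n y : Rpower (/ 2 ^ n) y = Rpower 2 (- INR n * y).
Proof.
  unfold Rpower. f_equal. rewrite ln_Rinv by (apply pow_lt; lra). rewrite ln_pow by lra. ring.
Qed.

Lemma inv_pow_Rpower n : / 2 ^ n = Rpower 2 (- INR n).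
Proof. rewrite Rpower_Ropp, Rpower_pow by lra. reflexivity. Qed.

Section Main.
Variable phi : R -> R.
Hypothesis Hp : dyadic_partition phi.
Variable L : R.
Hypothesis HL0 : 0 <= L.
Hypothesis HL : forall r, Rabs (Derive phi r) <= L.
Variable f : R -> R -> R.
Hypothesis HfC : C1_on Omega0 f.
Variables Sf St Sx : R.
Hypothesis HSf : forall t x, Omega0 t -> Rabs (f t x) <= Sf.
Hypothesis HSt : forall t x, Omega0 t -> Rabs (dt f t x) <= St.
Hypothesis HSx : forall t x, Omega0 t -> Rabs (dx f t x) <= Sx.
Hypothesis HSf0 : 0 <= Sf.
Hypothesis HSt0 : 0 <= St.
Hypothesis HSx0 : 0 <= Sx.
Variable n : nat.

Lemma fn_bnd : Bnd (fn phi f n) Sf (St + 2 ^ n * L * Sf) Sx.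
Proof.
  assert (P := pow2_pos n).
  set (G := fun t x => f t x * un phi n t).
  destruct HfC as [_ Hf].
  assert (K : forall t x, 0 < t -> fn phi f n t x = G t x /\ dt (fn phi f n) t x = dt G t x /\
                dx (fn phi f n) t x = dx G t x).
  { intros t x Ht. split. unfold fn, G, un. destruct (Rlt_dec 0 t); [reflexivity|lra].
    apply (dt_ext_box _ G t x t Ht).
    intros t' x' H1 _. apply Rabs_def2 in H1. unfold fn, G, un. destruct (Rlt_dec 0 t'); [reflexivity|lra].
    rewrite Rminus_diag, Rabs_R0; lra. rewrite Rminus_diag, Rabs_R0; lra. }
  assert (Q : 0 < / 2 ^ n / 16) by (apply Rdiv_lt_0_compat; [apply Rinv_0_lt_compat|]; lra).
  assert (K0 : forall t x, t <= 0 -> fn phi f n t x = 0 /\ dt (fn phi f n) t x = 0 /\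
                dx (fn phi f n) t x = 0).
  { intros t x Ht. split. unfold fn. destruct (Rlt_dec 0 t); [lra|reflexivity].
    assert (HEQ : forall t' x', Rabs (t' - t) < / 2 ^ n / 16 -> Rabs (x' - x) < / 2 ^ n / 16 ->
       fn phi f n t' x' = (fun _ _ : R => 0) t' x').
    { intros t' x' H1 _. apply Rabs_def2 in H1. apply (fn_support phi Hp n). lra. }
    assert (Z : Rabs (t - t) < / 2 ^ n / 16 / 2) by (rewrite Rminus_diag, Rabs_R0; lra).
    assert (Z' : Rabs (x - x) < / 2 ^ n / 16 / 2) by (rewrite Rminus_diag, Rabs_R0; lra).
    destruct (dt_ext_box (fn phi f n) (fun _ _ => 0) t x (/ 2 ^ n / 16) Q HEQ t x Z Z') as [E1 E2].
    rewrite E1, E2. unfold dt, dx. rewrite !Derive_const. auto. }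
  assert (B01 : forall t, 0 <= un phi n t <= 1) by (intros; apply (phi_01 phi Hp)).
  split; [|split]; intros t x; (destruct (Rlt_or_le 0 t) as [Ht|Ht];
    [|destruct (K0 t x Ht) as [Z1 [Z2 Z3]]; rewrite ?Z1, ?Z2, ?Z3, Rabs_R0;
      try (assert (0 <= 2 ^ n * L * Sf) by (apply Rmult_le_pos; [apply Rmult_le_pos|]; lra)); lra]);
    destruct (K t x Ht) as [E1 [E2 E3]]; destruct (Hf t x Ht) as [D1 [D2 _]].
  - rewrite E1. unfold G. rewrite Rabs_mult. specialize (HSf t x Ht). specialize (B01 t).
    rewrite (Rabs_pos_eq (un phi n t)) by lra. assert (0 <= Rabs (f t x)) by apply Rabs_pos. nra.
  - rewrite E2. unfold G. rewrite dt_mult; [|exact D1|apply un_ex; auto].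
    change (dt (fun t _ => un phi n t) t x) with (Derive (un phi n) t).
    rewrite un_Derive by auto. eapply Rle_trans; [apply Rabs_triang|].
    rewrite !Rabs_mult. specialize (HSf t x Ht). specialize (HSt t x Ht). specialize (B01 t).
    specialize (HL (2 ^ n * t)).
    rewrite (Rabs_pos_eq (un phi n t)) by lra. rewrite (Rabs_pos_eq (2 ^ n)) by lra.
    assert (0 <= Rabs (f t x)) by apply Rabs_pos. assert (0 <= Rabs (dt f t x)) by apply Rabs_pos.
    assert (0 <= Rabs (Derive phi (2 ^ n * t))) by apply Rabs_pos.
    assert (Rabs (dt f t x) * un phi n t <= St) by nra.
    assert (Rabs (f t x) * (2 ^ n * Rabs (Derive phi (2 ^ n * t))) <= Sf * (2 ^ n * L)).
    { apply Rmult_le_compat; try nra. }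
    nra.
  - rewrite E3. unfold G. rewrite dx_mult; [|exact D2|apply ex_derive_const].
    change (dx (fun t _ => un phi n t) t x) with (Derive (fun _ : R => un phi n t) x).
    rewrite Derive_const, Rmult_0_r, Rplus_0_r, Rabs_mult.
    specialize (HSx t x Ht). specialize (B01 t).
    rewrite (Rabs_pos_eq (un phi n t)) by lra. assert (0 <= Rabs (dx f t x)) by apply Rabs_pos. nra.
Qed.


Definition dl := / 2 ^ n.
Definition Nn := (8 * 2 ^ n)%nat.
Definition NN := INR Nn.
Definition ss := 5/32 * dl.
Definition yk (k : nat) := -1/2 + INR k / NN.
Definition Nf := Sf + St + Sx.
Definition c0 := / ((17 + L) * Nf).
Definition Fa k := fun a u => fn phi f n (ss + dl * a) (yk k + dl * u).
Definition Qf := fun (a u : R) => psi (0 + 8 * u).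
Definition Hk k := fun a u => c0 * (Fa k a u * Qf a u).
Definition Pk k := fun t x => fn phi f n t x * psi (NN * repT (x - yk k)).
Definition gk k := per (Hk k).

Lemma dl_pos : 0 < dl.
Proof. unfold dl. apply Rinv_0_lt_compat, pow2_pos. Qed.

Lemma dl_le1 : dl <= 1.
Proof.
  unfold dl. rewrite <- Rinv_1. apply Rinv_le_contravar. lra.
  apply pow_R1_Rle. lra.
Qed.

Lemma NN_eq : NN = 8 * 2 ^ n.
Proof. unfold NN, Nn. rewrite mult_INR, pow_INR. simpl. f_equal; f_equal; ring. Qed.

Lemma NN_dl : NN * dl = 8.
Proof. rewrite NN_eq. unfold dl. field. apply pow_nonzero. lra. Qed.

Lemma pow_dl : 2 ^ n * dl = 1.
Proof. unfold dl. field. apply pow_nonzero. lra. Qed.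

Lemma Fa_C1 k : C1D (fun _ => True) (Fa k).
Proof. apply C1D_affine. apply fn_C1; auto. Qed.

Lemma psi_C1 : C1D (fun _ => True) (fun _ x => psi x).
Proof. apply C1D_x. apply ex_derive_psi. apply continuous_Derive_psi. Qed.

Lemma Qf_C1 : C1D (fun _ => True) Qf.
Proof. exact (C1D_affine (fun _ x => psi x) 0 1 0 8 psi_C1). Qed.

Lemma Fa_bnd k : Bnd (Fa k) Sf (dl * (St + 2 ^ n * L * Sf)) (dl * Sx).
Proof.
  destruct fn_bnd as [B0 [B1 B2]].
  assert (Hd := dl_pos).
  split; [|split]; intros a u.
  - apply B0.
  - unfold Fa. rewrite dt_affine. rewrite Rabs_mult, Rabs_pos_eq by lra.
    apply Rmult_le_compat_l; [lra|apply B1].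
    destruct (fn_C1 phi Hp n f HfC (ss + dl * a) (yk k + dl * u) I) as [Q _]; exact Q.
  - unfold Fa. rewrite dx_affine. rewrite Rabs_mult, Rabs_pos_eq by lra.
    apply Rmult_le_compat_l; [lra|apply B2].
    destruct (fn_C1 phi Hp n f HfC (ss + dl * a) (yk k + dl * u) I) as [_ [Q _]]; exact Q.
Qed.

Lemma Qf_bnd : Bnd Qf 1 0 16.
Proof.
  split; [|split]; intros a u.
  - apply psi_bound.
  - unfold Qf, dt. rewrite Derive_const, Rabs_R0. lra.
  - unfold Qf. change (Rabs (dx (fun t x => (fun _ x => psi x) (0 + 1 * t) (0 + 8 * x)) a u) <= 16).
    rewrite dx_affine. unfold dx. rewrite Derive_psi. rewrite Rabs_mult.
    rewrite Rabs_pos_eq by lra. assert (B := dpsi_bound (0 + 8 * u)). lra.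
    apply ex_derive_psi.
Qed.


Lemma c0_pos : 0 < Nf -> 0 < c0.
Proof. intros H. unfold c0. apply Rinv_0_lt_compat. apply Rmult_lt_0_compat; lra. Qed.

Lemma Hk_C1 k : 0 < Nf -> C1D (fun _ => True) (Hk k).
Proof.
  intros H. unfold Hk. apply C1D_scal. apply Dopen_True.
  apply C1D_mult. apply Dopen_True. apply Fa_C1. apply Qf_C1.
Qed.

Lemma Hk_bnd k : 0 < Nf -> Bnd (Hk k) (c0 * (Sf * 1)) (c0 * (dl * (St + 2 ^ n * L * Sf) * 1 + Sf * 0))
   (c0 * (dl * Sx * 1 + Sf * 16)).
Proof.
  intros H. apply bnd_prod. left; apply c0_pos; auto. apply Fa_C1. apply Qf_C1. apply Fa_bnd. apply Qf_bnd.
Qed.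

Lemma Hk_sum : 0 < Nf -> c0 * (Sf * 1) + c0 * (dl * (St + 2 ^ n * L * Sf) * 1 + Sf * 0) +
   c0 * (dl * Sx * 1 + Sf * 16) <= 1.
Proof.
  intros H. assert (E : c0 * ((17 + L) * Nf) = 1) by (unfold c0; field; nra).
  assert (P := c0_pos H). assert (D1 := dl_le1). assert (D0 := dl_pos).
  assert (E2 : dl * (2 ^ n * L * Sf) = L * Sf) by (replace (dl * (2 ^ n * L * Sf)) with ((2 ^ n * dl) * L * Sf) by ring; rewrite pow_dl; ring).
  assert (A : Sf * 1 + (dl * (St + 2 ^ n * L * Sf) * 1 + Sf * 0) + (dl * Sx * 1 + Sf * 16)
     <= (17 + L) * Nf).
  { unfold Nf. assert (dl * St <= St) by nra. assert (dl * Sx <= Sx) by nra. nra. }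
  nra.
Qed.

Lemma Hk_vanish k : forall a u, 1/8 < Rabs u -> Hk k a u = 0.
Proof.
  intros a u H. unfold Hk, Qf. rewrite psi_zero. ring.
  rewrite Rplus_0_l, Rabs_mult, Rabs_pos_eq by lra. lra.
Qed.

Lemma Hk_supp k : forall a u, Hk k a u <> 0 -> Rabs a + Rabs u < 7/32.
Proof.
  intros a u H. assert (D0 := dl_pos).
  assert (U : Rabs u < 1/8).
  { destruct (Rlt_or_le (Rabs u) (1/8)); auto. exfalso. apply H. unfold Hk, Qf. rewrite psi_zero. ring.
    rewrite Rplus_0_l, Rabs_mult, Rabs_pos_eq by lra. lra. }
  assert (T : dl / 16 < ss + dl * a < dl / 4).
  { destruct (Rlt_or_le (dl / 16) (ss + dl * a)); [destruct (Rlt_or_le (ss + dl * a) (dl / 4))|].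
    - auto.
    - exfalso. apply H. unfold Hk, Fa. rewrite (fn_support phi Hp n). ring. right. unfold dl in *. lra.
    - exfalso. apply H. unfold Hk, Fa. rewrite (fn_support phi Hp n). ring. left. unfold dl in *. lra. }
  unfold ss in T. assert (-3/32 < a < 3/32) by (split; nra).
  assert (Rabs a < 3/32) by (apply Rabs_def1; lra). lra.
Qed.


Lemma gk_B1 k : 0 < Nf -> Defs.B1 (gk k).
Proof.
  intros H. apply (B1_per (Hk k) _ _ _ (Hk_C1 k H) (Hk_vanish k) (Hk_supp k) (Hk_bnd k H) (Hk_sum H)).
Qed.

Lemma NN_ge8 : 8 <= NN.
Proof. rewrite NN_eq. assert (1 <= 2 ^ n) by (apply pow_R1_Rle; lra). lra. Qed.

Lemma Pk_C1c k : C1c (Pk k).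
Proof.
  set (K' := fun a u : R => psi (0 + NN * u)).
  assert (CK : C1D (fun _ => True) K') by exact (C1D_affine (fun _ x => psi x) 0 1 0 NN psi_C1).
  assert (VK : forall a u, 1/8 < Rabs u -> K' a u = 0).
  { intros a u Hu. unfold K'. apply psi_zero. rewrite Rplus_0_l, Rabs_mult, (Rabs_pos_eq NN).
    assert (Q := NN_ge8). nra. assert (Q := NN_ge8). lra. }
  destruct (per_C1 K' VK CK) as [CP _].
  assert (C2 := C1D_affine (per K') 0 1 (- yk k) 1 CP).
  split; [split|].
  - intros t x _. unfold Pk. replace (x + 1 - yk k) with ((x - yk k) + 1) by ring.
    rewrite repT_plus1. f_equal. apply (fn_periodic phi n f (proj1 HfC) t 1 x).
  - apply (C1D_ext _ _ (fun t x => fn phi f n t x * per K' (0 + 1 * t) (- yk k + 1 * x))).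
    intros t x. unfold Pk, per, K'. f_equal. f_equal. rewrite Rplus_0_l. f_equal. f_equal. ring.
    apply C1D_mult. apply Dopen_True. apply fn_C1; auto. exact C2.
  - exists 1. intros t x Ht. unfold Pk. rewrite (fn_support phi Hp n). ring.
    assert (D1 := dl_le1). assert (D0 := dl_pos). unfold dl in *.
    destruct (Rle_or_lt 0 t). rewrite Rabs_right in Ht by lra. right. lra.
    rewrite Rabs_left in Ht by lra. left. lra.
Qed.

Lemma Sdz_id k t x : Sdz dl ss (yk k) (gk k) t x = / dl ^ 2 * (c0 * Pk k t x).
Proof.
  assert (D0 := dl_pos). assert (N8 := NN_ge8).
  assert (ND := NN_dl).
  unfold Sdz. set (r := repT (x - yk k)).
  assert (Hr : exists m, r = x - yk k - IZR m) by (exists (Int_part (x - yk k + 1/2)); reflexivity).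
  destruct Hr as [m Em].
  destruct (Rlt_dec (dist2 t x ss (yk k)) dl) as [Hd|Hd].
  - unfold lift. destruct (Rlt_dec (Rabs (r / dl)) (1/2)) as [Hb|Hb].
    + unfold gk, per. rewrite repT_id by (apply Rabs_def2 in Hb; lra).
      unfold Hk, Fa, Qf, Pk. fold r.
      replace (ss + dl * ((t - ss) / dl)) with t by (field; lra).
      replace (yk k + dl * (r / dl)) with (x + IZR (- m)) by (rewrite opp_IZR; rewrite Em; field; lra).
      rewrite (fn_periodic phi n f (proj1 HfC)).
      replace (0 + 8 * (r / dl)) with (NN * r). ring.
      rewrite <- ND. field. lra.
    + unfold Pk. fold r. rewrite psi_zero. ring.
      assert (E : NN * r = 8 * (r / dl)) by (rewrite <- ND; field; lra).
      rewrite E, Rabs_mult, (Rabs_pos_eq 8) by lra. lra.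
  - destruct (Rlt_or_le (Rabs (NN * r)) 1) as [Hs|Hs].
    + unfold Pk. fold r. rewrite (fn_support phi Hp n). ring.
      apply Rnot_lt_le in Hd. unfold dist2 in Hd.
      assert (T := dT_repT x (yk k)). fold r in T.
      rewrite Rabs_mult, Rabs_pos_eq in Hs by lra.
      assert (Rabs r < dl / 8).
      { assert (0 <= Rabs r) by apply Rabs_pos.
        apply (Rmult_lt_reg_l NN). lra. assert (NN * (dl / 8) = 1) by (replace (NN * (dl / 8)) with (NN * dl / 8) by field; rewrite ND; field). lra. }
      assert (Rabs (t - ss) > 7 / 8 * dl) by lra.
      unfold ss in *. destruct (Rle_or_lt 0 (t - 5/32 * dl)).
      * rewrite Rabs_right in H0 by lra. right. unfold dl in *. lra.
      * rewrite Rabs_left in H0 by lra. left. unfold dl in *. lra.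
    + unfold Pk. fold r. rewrite psi_zero by lra. ring.
Qed.


Lemma Rpower_pos x y : 0 < Rpower x y.
Proof. unfold Rpower. apply exp_pos. Qed.

Lemma XPk alpha X Hn k : 0 < Nf -> linear_on_C1c X -> Holder_norm alpha X (-1) 2 = Finite Hn ->
  (k < Nn)%nat -> Rabs (X (Pk k)) <= dl ^ 2 / c0 * (Hn * Rpower dl alpha).
Proof.
  intros HN HX HH Hk.
  assert (D0 := dl_pos). assert (D1 := dl_le1). assert (C0 := c0_pos HN).
  set (S := Sdz dl ss (yk k) (gk k)).
  assert (ES : S = fun t x => / dl ^ 2 * (c0 * Pk k t x)).
  { apply functional_extensionality; intros t; apply functional_extensionality; intros x. apply Sdz_id. }
  assert (CS : C1c S) by (rewrite ES; apply C1c_scal; apply C1c_scal; apply Pk_C1c).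
  assert (EX : X (Pk k) = dl ^ 2 / c0 * X S).
  { transitivity (X (fun t x => dl ^ 2 / c0 * S t x)).
    f_equal. apply functional_extensionality; intros t; apply functional_extensionality; intros x.
    rewrite ES. field. split; lra.
    apply X_scal; auto. }
  assert (HB : Rpower dl (- alpha) * Rabs (X S) <= Hn).
  { destruct (Lub_Rbar_correct (fun v => exists delta s y g,
      0 < delta <= 1 /\ -1 <= s <= 2 /\ -1/2 <= y < 1/2 /\ Defs.B1 g /\
      v = Rpower delta (- alpha) * Rabs (X (Sdz delta s y g)))) as [U _].
    unfold Holder_norm in HH. rewrite HH in U. apply U.
    exists dl, ss, (yk k), (gk k). split; [lra|]. split; [unfold ss; lra|].
    split; [|split; [apply gk_B1; auto|reflexivity]].
    assert (HkN : INR k < NN) by (apply lt_INR; auto). assert (N8 := NN_ge8).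
    assert (0 <= INR k) by apply pos_INR.
    assert (0 <= INR k / NN) by (apply Rmult_le_pos; [lra|left; apply Rinv_0_lt_compat; lra]).
    assert (INR k / NN < 1).
    { assert (INR k / NN * NN = INR k) by (field; lra). assert (0 < / NN) by (apply Rinv_0_lt_compat; lra).
      unfold Rdiv in *. nra. }
    unfold yk. lra. }
  assert (RP : Rpower dl alpha * Rpower dl (- alpha) = 1).
  { rewrite <- Rpower_plus. replace (alpha + - alpha) with 0 by ring. apply Rpower_O; lra. }
  assert (P1 := Rpower_pos dl alpha).
  rewrite EX, Rabs_mult, (Rabs_pos_eq (dl ^ 2 / c0)).
  apply Rmult_le_compat_l. apply Rlt_le. apply Rdiv_lt_0_compat; [apply pow_lt|]; lra.
  replace (Rabs (X S)) with (Rpower dl alpha * (Rpower dl (- alpha) * Rabs (X S))) by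
    (rewrite <- Rmult_assoc, RP; ring).
  rewrite (Rmult_comm Hn). apply Rmult_le_compat_l; lra.
  apply Rlt_le. apply Rdiv_lt_0_compat; [apply pow_lt|]; lra.
Qed.

Lemma Nn_ge2 : (2 <= Nn)%nat.
Proof. unfold Nn. assert (0 < 2 ^ n)%nat by (apply Nat.neq_0_lt_0, Nat.pow_nonzero; lia). lia. Qed.

Lemma main_bound alpha X Hn : 0 < Nf -> linear_on_C1c X -> Holder_norm alpha X (-1) 2 = Finite Hn ->
  Rabs (X (fn phi f n)) <= 8 * (17 + L) * Rpower 2 (- INR n * (1 + alpha)) * Nf * Hn.
Proof.
  intros HN HX HH.
  assert (D0 := dl_pos). assert (C0 := c0_pos HN).
  assert (Ef : fn phi f n = fun t x => ssum (fun k => Pk k t x) Nn).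
  { apply functional_extensionality; intros t; apply functional_extensionality; intros x.
    unfold Pk. rewrite ssum_scal. unfold NN, yk. rewrite partition by apply Nn_ge2. ring. }
  rewrite Ef. destruct (X_sum X Pk Nn HX Pk_C1c) as [_ E]. rewrite E.
  eapply Rle_trans. apply (ssum_abs_le _ (fun _ => dl ^ 2 / c0 * (Hn * Rpower dl alpha))).
  intros k Hk. apply (XPk alpha X Hn k HN HX HH Hk).
  rewrite ssum_const. fold NN. rewrite NN_eq.
  assert (E1 : Rpower dl (1 + alpha) = dl * Rpower dl alpha) by (rewrite Rpower_plus, Rpower_1; lra).
  unfold dl in E1 at 1. rewrite Rpower_inv_pow in E1. rewrite E1.
  assert (E2 : dl ^ 2 / c0 = dl ^ 2 * ((17 + L) * Nf)) by (unfold c0; field; nra).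
  rewrite E2. assert (E3 : 2 ^ n * dl = 1) by apply pow_dl.
  replace (8 * 2 ^ n * (dl ^ 2 * ((17 + L) * Nf) * (Hn * Rpower dl alpha)))
    with (8 * (17 + L) * (dl * Rpower dl alpha) * Nf * Hn * (2 ^ n * dl)) by ring.
  rewrite E3. lra.
Qed.

End Main.

Theorem lemma4p4 (phi : R -> R) (Hphi : dyadic_partition phi) :
  exists C0 : R,
    forall (alpha : R) (f : R -> R -> R),
      -1 < alpha < 0 ->
      C1_on Omega0 f ->
      (exists T1, forall t x, T1 <= t -> f t x = 0) ->
      is_finite (C1norm_on Omega0 f) ->
      forall (X : (R -> R -> R) -> R) (n : nat),
        in_Calpha alpha X ->
        Rabs (X (fn phi f n)) <=
          C0 * Rpower 2 (- INR n * (1 + alpha))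
             * real (C1norm_on Omega0 f) * real (Holder_norm alpha X (-1) 2).
Proof.
  destruct (phi_bound phi Hphi) as [L [HL0 HL]].
  exists (8 * (17 + L)).
  intros alpha f Ha HfC _ Hfin X n [HX HH].
  assert (Hlt : -1 < 2) by lra. specialize (HH (-1) 2 Hlt).
  set (Hn := real (Holder_norm alpha X (-1) 2)).
  assert (HH' : Holder_norm alpha X (-1) 2 = Finite Hn) by (symmetry; exact HH).
  destruct (C1norm_parts Omega0 f (ex_intro _ 1 Rlt_0_1) Hfin)
    as [a [b [c [E1 [E2 [E3 [Pa [Pb [Pc Er]]]]]]]]].
  rewrite Er.
  assert (HSf := sup_ub _ _ _ E1). assert (HSt := sup_ub _ _ _ E2). assert (HSx := sup_ub _ _ _ E3).
  destruct (Rlt_or_le 0 (a + b + c)) as [HN|HN].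
  - exact (main_bound phi Hphi L HL0 HL f HfC a b c HSf HSt HSx Pa Pb Pc n alpha X Hn HN HX HH').
  - assert (a = 0) by lra.
    assert (Ef : fn phi f n = fun _ _ => 0).
    { apply functional_extensionality; intros t; apply functional_extensionality; intros x.
      unfold fn. destruct (Rlt_dec 0 t) as [Ht|Ht]; [|reflexivity].
      specialize (HSf t x Ht). assert (f t x = 0) by (apply Rabs_eq_0; apply Rle_antisym; [lra|apply Rabs_pos]).
      rewrite H0. ring. }
    rewrite Ef, X_zero by auto. rewrite Rabs_R0.
    replace (a + b + c) with 0 by lra. lra.
Qed.
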